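(* Let $b\in L^1(\mathbb{R}_+)$, $\lambda>0$, and let $\varphi$ be the solution of $\varphi''-\lambda^2\tilde m^2(t)\varphi=0$ on $[0,\infty)$ described in the context. Set $\nu(t)=-\varphi'(t)/\varphi(t)$. Then there exists $\delta_2\in(0,1)$ such that $\lambda\delta_2\le\nu(t)\le\lambda/\delta_2$ for all $t\ge0$.
   Context: $m(t)=e^{\int_0^tb(\tau)d\tau}$, $h(t)=\int_0^t\frac{d\tau}{m(\tau)}$, $\eta=h^{-1}$ (inverse function), $\tilde m(t)=m(\eta(t))$, $k=\exp(\int_0^\infty b(\tau)d\tau)$. $\varphi$ is the solution of $\varphi''=\lambda^2\tilde m^2\varphi$ for which there exists $t_0\ge0$ such that $(\varphi(t),\varphi'(t))=\big(1+o(1),\,-\lambda k+o(1)\big)e^{-\lambda\int_{t_0}^t\tilde m(\tau)d\tau}$ as $t\to\infty$. *)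

(* Defs.v *)
From HB Require Import structures.
From mathcomp Require Import all_boot all_order all_algebra.
From mathcomp Require Import all_classical all_reals all_analysis.
Set Implicit Arguments. Unset Strict Implicit. Unset Printing Implicit Defensive.
Import Order.TTheory GRing.Theory Num.Theory.
Import numFieldNormedType.Exports.
Local Open Scope classical_set_scope.
Local Open Scope ring_scope.

Section defs.
Variable R : realType.
Notation mu := (@lebesgue_measure R).

Definition mfun (b : R -> R) (t : R) : R :=
  expR (\int[mu]_(x in `[0, t]) b x).

Definition hfun (b : R -> R) (t : R) : R :=
  \int[mu]_(x in `[0, t]) (mfun b x)^-1.

(* eta = h^{-1} on [0, +oo): the t >= 0 with h t = s *)
Definition etafun (b : R -> R) (s : R) : R :=
  xget 0 [set t | 0 <= t /\ hfun b t = s].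

Definition mtilde (b : R -> R) (t : R) : R := mfun b (etafun b t).

Definition kconst (b : R -> R) : R :=
  expR (\int[mu]_(x in `[0, +oo[) b x).
End defs.

(* Main.v *)
Require Import Defs.
From HB Require Import structures.
From mathcomp Require Import all_boot all_order all_algebra.
From mathcomp Require Import all_classical all_reals all_analysis.
From mathcomp Require Import ring lra.
Import Order.TTheory GRing.Theory Num.Theory.
Import numFieldNormedType.Exports.
Local Open Scope classical_set_scope.
Local Open Scope ring_scope.

Theorem lemma3p2 (R : realType) (b : R -> R) (lam : R) (phi dphi : R -> R) :
  (@lebesgue_measure R).-integrable `[0, +oo[ (EFin \o b) ->
  0 < lam ->
  (forall t : R, 0 < t -> is_derive t 1 phi (dphi t)) ->
  (forall t : R, 0 < t ->
     is_derive t 1 dphi (lam ^+ 2 * (mtilde b t) ^+ 2 * phi t)) ->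
  {within `[0, +oo[, continuous phi} ->
  {within `[0, +oo[, continuous dphi} ->
  (exists t0 : R, 0 <= t0 /\
     ((fun t : R => phi t * expR (lam * \int[@lebesgue_measure R]_(x in `[t0, t]) mtilde b x))
       @ +oo --> (1 : R)) /\
     ((fun t : R => dphi t * expR (lam * \int[@lebesgue_measure R]_(x in `[t0, t]) mtilde b x))
       @ +oo --> - lam * kconst b)) ->
  exists delta2 : R, 0 < delta2 < 1 /\
    forall t : R, 0 <= t ->
      lam * delta2 <= - dphi t / phi t /\ - dphi t / phi t <= lam / delta2.
Proof.
move=> _ lam0 Dphi Ddphi cphi cdphi [t0 [_ [hp hd]]].
set E := fun t => expR (lam * \int[@lebesgue_measure R]_(x in `[t0, t]) mtilde b x).
change ((fun t => phi t * E t) @ +oo --> (1:R)) in hp.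
change ((fun t => dphi t * E t) @ +oo --> - lam * kconst b) in hd.
have E0 : forall t, 0 < E t by move=> t; exact: expR_gt0.
set k := kconst b.
have k0 : 0 < lam * k by rewrite mulr_gt0 // expR_gt0.
set g := fun t => phi t * dphi t.
have gincr : forall x y, 0 <= x -> x <= y -> g x <= g y.
  apply: ger0_derive1_ndecry.
  - move=> x; rewrite in_itv /= andbT => x0.
    apply: derivableM; [exact: (@ex_derive _ _ _ _ _ _ _ (Dphi x x0))|
       exact: (@ex_derive _ _ _ _ _ _ _ (Ddphi x x0))].
  - move=> x; rewrite in_itv /= andbT => x0.
    rewrite derive1E (deriveM (@ex_derive _ _ _ _ _ _ _ (Dphi x x0))
       (@ex_derive _ _ _ _ _ _ _ (Ddphi x x0))).
    have -> := @derive_val _ _ _ _ _ _ _ (Dphi x x0).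
    have -> := @derive_val _ _ _ _ _ _ _ (Ddphi x x0).
    rewrite /GRing.scale /=.
    idtac.
    have -> : phi x * (lam ^+ 2 * mtilde b x ^+ 2 * phi x) = (lam * mtilde b x * phi x) ^+ 2.
      by rewrite !exprMn expr2; ring.
    by rewrite -expr2 addr_ge0 // sqr_ge0.
  - by move=> x; apply: continuousM; [exact: cphi| exact: cdphi].
have hN : (fun t => - (dphi t * E t) / (phi t * E t)) @ +oo --> lam * k.
  have H2 : (fun t => (phi t * E t)^-1) @ +oo --> (1:R)^-1.
    by apply: cvgV => //; exact: oner_neq0.
  have H := cvgM (cvgN hd) H2.
  rewrite invr1 mulr1 mulNr opprK in H; exact: H.
have ev1 : \forall t \near +oo, 0 < phi t * E t.
  have := @cvgr_gt _ _ _ _ _ _ hp; apply; exact: ltr01.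
have ev2 : \forall t \near +oo, dphi t * E t < 0.
  have := @cvgr_lt _ _ _ _ _ _ hd; apply; by rewrite mulNr oppr_lt0.
have ev3 : \forall t \near +oo, `|lam * k - (- (dphi t * E t) / (phi t * E t))| < lam * k / 2.
  have := @cvgr_dist_lt _ _ _ _ _ _ _ hN; apply; by rewrite divr_gt0.
have [M [Mr HM]] : \forall t \near +oo, (0 < phi t * E t) /\ (dphi t * E t < 0) /\
   `|lam * k - (- (dphi t * E t) / (phi t * E t))| < lam * k / 2.
  near=> t; split; [|split]; near: t; [exact: ev1| exact: ev2 | exact: ev3].
Unshelve. all: end_near.
set T := `|M| + 1.
have MT : M < T by rewrite /T; have := real_ler_norm Mr; lra.
have T0 : 0 < T by rewrite /T; have := normr_ge0 M; lra.
have big : forall t, M < t -> [/\ 0 < phi t, dphi t < 0 &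
    lam * k / 2 < - dphi t / phi t < 3 * (lam * k) / 2].
  move=> t /HM [h1 [h2 h3]].
  have Et := E0 t.
  have p0 : 0 < phi t by rewrite -(pmulr_lgt0 _ Et).
  have d0 : dphi t < 0 by rewrite -(pmulr_llt0 _ Et).
  have -> : - dphi t / phi t = - (dphi t * E t) / (phi t * E t).
    by field; apply/andP; split; rewrite gt_eqF.
  split => //; move: h3; set v := - (dphi t * E t) / (phi t * E t).
  rewrite ltr_norml => /andP [h4 h5]; apply/andP; split; lra.
have gneg : forall t, 0 <= t -> g t < 0.
  move=> t t0'; have [tT|Tt] := leP t T.
    apply: (le_lt_trans (gincr _ _ t0' tT)).
    have [p0 d0 _] := big T MT; rewrite /g; nra.
  have [p0 d0 _] := big t (lt_trans MT Tt); rewrite /g; nra.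
have subT : forall a, 0 <= a -> `[a, T] `<=` `[0, +oo[.
  move=> a a0 x; rewrite /= !in_itv /= andbT => /andP [ax _]; exact: le_trans ax.
have phipos : forall t, 0 <= t -> 0 < phi t.
  move=> t t0'; have [tT|Tt] := leP t T; last by have [] := big t (lt_trans MT Tt).
  have gt := gneg t t0'.
  have [pT _ _] := big T MT.
  rewrite lt_neqAle eq_sym; apply/andP; split.
    by apply/eqP => h; move: gt; rewrite /g h mul0r ltxx.
  rewrite leNgt; apply/negP => pt.
  have hv : Num.min (phi t) (phi T) <= 0 <= Num.max (phi t) (phi T).
    by rewrite ge_min le_max (ltW pt) (ltW pT) orbT.
  have [c cin pc] := @IVT R phi t T 0 tT (continuous_subspaceW (subT t t0') cphi) hv.
  move: cin; rewrite in_itv /= => /andP [tc _].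
  by move: (gneg c (le_trans t0' tc)); rewrite /g pc mul0r ltxx.
have dneg : forall t, 0 <= t -> dphi t < 0.
  by move=> t t0'; rewrite -(pmulr_rlt0 _ (phipos t t0')); exact: gneg.
set nu := fun t => - dphi t / phi t.
have cnu : {within `[0, T], continuous nu}.
  have cp := continuous_subspaceW (subT 0 (lexx 0)) cphi.
  have cd := continuous_subspaceW (subT 0 (lexx 0)) cdphi.
  rewrite continuous_subspace_in => x; rewrite inE /= in_itv /= => /andP [x0 _].
  apply: (@continuousM R (subspace `[0, T]) (fun t => - dphi t) (fun t => (phi t)^-1) x).
    by apply: continuousN; exact: cd.
  by apply: continuousV; [rewrite gt_eqF // phipos | exact: cp].
have [c1 c1in c1min] := EVT_min (ltW T0) cnu.
have [c2 c2in c2max] := EVT_max (ltW T0) cnu.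
have c10 : 0 <= c1 by move: c1in; rewrite in_itv /= => /andP [].
have c20 : 0 <= c2 by move: c2in; rewrite in_itv /= => /andP [].
have nupos : forall t, 0 <= t -> 0 < nu t.
  by move=> t t0'; rewrite /nu divr_gt0 // ?oppr_gt0 ?dneg ?phipos.
set a := Num.min (nu c1) (lam * k / 2).
set A := Num.max (nu c2) (3 * (lam * k) / 2).
have a0 : 0 < a by rewrite lt_min nupos //= divr_gt0.
have A0 : 0 < A by rewrite lt_max nupos.
have bnd : forall t, 0 <= t -> a <= nu t <= A.
  move=> t t0'; have [tT|Tt] := leP t T.
    have tin : t \in `[0, T] by rewrite in_itv /= t0' tT.
    rewrite ge_min le_max c1min // c2max //.
  have [_ _ /andP [h1 h2]] := big t (lt_trans MT Tt).
  by rewrite ge_min le_max (ltW h1) (ltW h2) !orbT.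
exists (Num.min (1/2) (Num.min (a / lam) (lam / A))).
set d := Num.min _ _.
have d0 : 0 < d by rewrite !lt_min !divr_gt0.
have [d1 [d2 d3]] : d <= 1/2 /\ d <= a / lam /\ d <= lam / A.
  by rewrite /d !ge_min !lexx !orbT.
have e1 : lam * (a / lam) = a by field; rewrite gt_eqF.
have e2 : A * (lam / A) = lam by field; rewrite gt_eqF.
split; first by apply/andP; split => //; lra.
move=> t t0'; have /andP [b1 b2] := bnd t t0'.
split; first by apply: le_trans b1; rewrite -e1 ler_pM2l.
rewrite ler_pdivlMr //; apply: (le_trans (y := A * d)); first by rewrite ler_pM2r.
by rewrite -[X in _ <= X]e2 ler_pM2l.
Qed.
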